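(* For any admissible $F$-weighted boundary stratum $\mathcal{S}$ of genus $g$, the RM-torus $T_\mathcal{S}$ has dimension at most $g-1$.
   Context: $F$ is a totally real number field of degree $g$ with trace pairing $\langle x,y\rangle=\mathrm{Tr}_{F/\mathbb{Q}}(xy)$. For a lattice $\mathcal{I}\subset F$ (rank $g$ additive subgroup), $\mathcal{I}^\vee=\{x\in F:\langle x,y\rangle\in\mathbb{Z}\ \forall y\in\mathcal{I}\}$. An $\mathcal{I}$-weighted stable curve is a stable curve of arithmetic genus $g$ and geometric genus $0$ with an element of $\mathcal{I}$ attached to each branch at each node, such that the two branches at a node have opposite weights, the weights on each component sum to zero, and the weights span $\mathcal{I}$ (''$F$-weighted'' = $\mathcal{I}$-weighted for some $\mathcal{I}$). An $F$-weighted boundary stratum $\mathcal{S}$ is the moduli space of weighted stable curves topologically equivalent (weight-preservingly) to a fixed one. $\mathrm{Sym}_{\mathbb{Q}}(F)\subset F\otimes_{\mathbb{Q}}F$ is the subspace of symmetric tensors, $\mathbf{S}_{\mathbb{Q}}(F)$ the quotient of $F\otimes_{\mathbb{Q}}F$ by the span of $x\otimes y-y\otimes x$ (and $\mathbf{S}_{\mathbb{Z}}(\mathcal{I}^\vee)$ the analogous quotient of $\mathcal{I}^\vee\otimes_{\mathbb{Z}}\mathcal{I}^\vee$), dual via $\langle a\otimes b,c\otimes d\rangle=\langle a,c\rangle\langle b,d\rangle$. $N(\mathcal{S})\subset\mathbf{S}_{\mathbb{Q}}(F)$ is the annihilator of the span of $r\otimes r$ over the weights $r$ of $\mathcal{S}$;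 $C(\mathcal{S})=\{x\in\mathbf{S}_{\mathbb{Q}}(F):\langle x,r\otimes r\rangle\ge 0\ \forall\text{ weights } r\}$. $\Lambda^1=\{x\in F\otimes_{\mathbb{Q}}F:\lambda x=x\lambda\ \forall\lambda\in F\}$ (for the natural $F$-bimodule structure), which lies in $\mathrm{Sym}_{\mathbb{Q}}(F)$, and $\mathrm{Ann}(\Lambda^1)\subset\mathbf{S}_{\mathbb{Q}}(F)$ is its annihilator. $\mathcal{S}$ is admissible if $C(\mathcal{S})\cap\mathrm{Ann}(\Lambda^1)\subset N(\mathcal{S})$. The ambient torus is $A_\mathcal{S}=\mathrm{Hom}_{\mathbb{Z}}(N(\mathcal{S})\cap\mathbf{S}_{\mathbb{Z}}(\mathcal{I}^\vee),\mathbb{G}_m)$, $p\colon A_\mathcal{S}\to\mathrm{Hom}(N(\mathcal{S})\cap\mathrm{Ann}(\Lambda^1)\cap\mathbf{S}_{\mathbb{Z}}(\mathcal{I}^\vee),\mathbb{G}_m)$ is the restriction map, and the RM-torus is $T_\mathcal{S}=p^{-1}(1)$, the kernel of $p$. *)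

(* Defs.v *)
From HB Require Import structures.
From mathcomp Require Import all_boot all_order all_algebra all_field.
Set Implicit Arguments. Unset Strict Implicit. Unset Printing Implicit Defensive.
Import Order.TTheory GRing.Theory Num.Theory.
Local Open Scope ring_scope.

Section RMTorus.
Variable F : fieldExtType rat.

Definition deg : nat := \dim {:F}.
Definition ebasis : deg.-tuple F := vbasis {:F}.

Definition totally_real : Prop :=
  forall (s : {rmorphism F -> algC}) (x : F), s x \is Num.real.

Definition coords (x : F) : 'rV[rat]_deg := \row_i coord ebasis i x.

(* matrix of multiplication by x (acting on coordinate row vectors) *)
Definition mulmx_of (x : F) : 'M[rat]_deg :=
  \matrix_(i, j) coord ebasis j (x * tnth ebasis i).

Definition trF (x : F) : rat := \tr (mulmx_of x).

(* F (x)_Q F is identified with 'M[rat]_deg via the basis e_i (x) e_j:     *)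
(* a (x) b  |->  (coords a)^T *m (coords b).  Under this identification   *)
(* the swap x(x)y |-> y(x)x is transposition.                             *)
Definition tens (a b : F) : 'M[rat]_deg := (coords a)^T *m coords b.

Definition gram : 'M[rat]_deg :=
  \matrix_(i, j) trF (tnth ebasis i * tnth ebasis j).

(* bilinear extension of <a(x)b, c(x)d> = <a,c><b,d> to F(x)F x F(x)F *)
Definition tpair (A B : 'M[rat]_deg) : rat :=
  \sum_i \sum_j \sum_k \sum_l A i j * B k l * gram i k * gram j l.

Definition symt (A : 'M[rat]_deg) : Prop := A^T = A.
(* span of x(x)y - y(x)x : antisymmetric tensors.  S_Q(F) = (F(x)F)/alt.  *)
(* A subset of S_Q(F) is represented by its (alt-saturated) preimage in   *)
(* F(x)F; the pairing of S_Q(F) with Sym_Q(F) is tpair on representatives.*)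
Definition altt (A : 'M[rat]_deg) : Prop := A^T = - A.

(*   lam.(a(x)b) = (lam a)(x)b ,  (a(x)b).lam = a(x)(b lam)                 *)
Definition lact (lam : F) (A : 'M[rat]_deg) := (mulmx_of lam)^T *m A.
Definition ract (lam : F) (A : 'M[rat]_deg) := A *m mulmx_of lam.

Definition Lambda1 (A : 'M[rat]_deg) : Prop := forall lam : F, lact lam A = ract lam A.

Definition AnnL1 (A : 'M[rat]_deg) : Prop := forall L, Lambda1 L -> tpair A L = 0.

Definition zspan (m : nat) (v : 'I_m -> F) (x : F) : Prop :=
  exists c : 'I_m -> int, x = \sum_i ((c i)%:~R : rat) *: v i.

Definition is_lattice (I : F -> Prop) : Prop :=
  exists b : deg.-tuple F, free b /\ forall x, I x <-> zspan (fun i => tnth b i) x.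

Definition dual_lattice (I : F -> Prop) (x : F) : Prop :=
  forall y, I y -> trF (x * y) \is a Num.int.

(* preimage in F(x)F of S_Z(I^v) \subset S_Q(F): image of I^v (x)_Z I^v  *)
(* (the Z-span of the a(x)b, a b in I^v), plus alt.                       *)
Definition SZ (I : F -> Prop) (A : 'M[rat]_deg) : Prop :=
  exists s : seq (F * F),
    (forall p, p \in s -> dual_lattice I p.1 /\ dual_lattice I p.2) /\
    altt (A - \sum_(p <- s) tens p.1 p.2).

(* Weighted stable curves of geometric genus 0, via their dual graphs.    *)
(* Vertices = irreducible components (all of geometric genus 0),          *)
(* half-edges = branches at nodes, hinv pairs the two branches of a node. *)
Record wgraph := WGraph {
  nV : nat;
  nH : nat;
  hvert : 'I_nH -> 'I_nV;
  hinv : 'I_nH -> 'I_nH;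
  wt : 'I_nH -> F }.

Definition adjacent (G : wgraph) : rel 'I_(nV G) :=
  fun u v => [exists h, (hvert h == u) && (hvert (hinv h) == v)].

Definition I_weighted_stable (I : F -> Prop) (g : nat) (G : wgraph) : Prop :=
  [/\ (* nodes: fixed-point-free involution on branches *)
      (forall h : 'I_(nH G), hinv (hinv h) = h) /\ (forall h : 'I_(nH G), hinv h != h),
      (0 < nV G)%N /\ (forall u v : 'I_(nV G), connect (@adjacent G) u v),
      (* arithmetic genus: #nodes - #components + 1 = g (all components rational) *)
      ((nH G %/ 2) + 1 = nV G + g)%N,
      (* stability: each rational component has >= 3 special points *)
      (forall v : 'I_(nV G), 3 <= #|[set h : 'I_(nH G) | hvert h == v]|)%N &
      [/\ forall h : 'I_(nH G), I (wt h),
          forall h : 'I_(nH G), wt (hinv h) = - wt h,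
          forall v : 'I_(nV G), \sum_(h : 'I_(nH G) | hvert h == v) wt h = 0 &
          forall x, I x <-> zspan (@wt G) x]].

Definition Nstr (G : wgraph) (A : 'M[rat]_deg) : Prop :=
  forall h : 'I_(nH G), tpair A (tens (wt h) (wt h)) = 0.
Definition Cstr (G : wgraph) (A : 'M[rat]_deg) : Prop :=
  forall h : 'I_(nH G), 0 <= tpair A (tens (wt h) (wt h)).

Definition admissible (G : wgraph) : Prop :=
  forall A, Cstr G A -> AnnL1 A -> Nstr G A.

(* quot_rank P d : for an alt-saturated P, the Q-span of its image in     *)
(* S_Q(F) = (F(x)F)/alt has dimension d; for a subgroup of S_Q(F) this is *)
(* its rank.                                                              *)
Definition span_dim (P : 'M[rat]_deg -> Prop) (d : nat) : Prop :=
  (exists s : seq 'M[rat]_deg, (forall A, A \in s -> P A) /\ free s /\ size s = d) /\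
  (forall s : seq 'M[rat]_deg, (forall A, A \in s -> P A) -> free s -> (size s <= d)%N).

Definition quot_rank (P : 'M[rat]_deg -> Prop) (d : nat) : Prop :=
  exists dP da, span_dim P dP /\ span_dim altt da /\ d = (dP - da)%N.

(* T_S = ker (Hom(X, G_m) -> Hom(X', G_m)) has character group X/X', so   *)
(* dim T_S = rank X - rank X'.                                            *)
Definition charX (I : F -> Prop) (G : wgraph) (A : 'M[rat]_deg) : Prop :=
  Nstr G A /\ SZ I A.
Definition charX' (I : F -> Prop) (G : wgraph) (A : 'M[rat]_deg) : Prop :=
  Nstr G A /\ AnnL1 A /\ SZ I A.

Definition RMtorus_dim (I : F -> Prop) (G : wgraph) (d : nat) : Prop :=
  exists rX rX', quot_rank (charX I G) rX /\ quot_rank (charX' I G) rX' /\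
                 d = (rX - rX')%N.

End RMTorus.

(* Main.v *)
Require Import Defs.
From HB Require Import structures.
From mathcomp Require Import all_boot all_order all_algebra all_field.
From mathcomp Require Import ring.
Set Implicit Arguments. Unset Strict Implicit. Unset Printing Implicit Defensive.
Import Order.TTheory GRing.Theory Num.Theory.
Local Open Scope ring_scope.

Section Basics.
Variable F : fieldExtType rat.
Local Notation g := (deg F).
Local Notation e := (ebasis F).

Lemma ebasis_basis : basis_of fullv e.
Proof. exact: vbasisP. Qed.

Lemma ebasis_free : free e.
Proof. exact: basis_free ebasis_basis. Qed.

Lemma deg_gt0 : (0 < g)%N.
Proof.
rewrite lt0n /deg dimv_eq0; apply/negP => /eqP h.
have : (1 : F) \in (fullv : {vspace F}) by apply: memvf.
by rewrite h memv0 oner_eq0.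
Qed.

Lemma coords_expand (x : F) : x = \sum_(i < g) coords x 0 i *: tnth e i.
Proof.
rewrite {1}(coord_vbasis (memvf x)); apply: eq_bigr => i _.
by rewrite mxE (tnth_nth 0).
Qed.

Lemma coordsP (a : rat) (x y : F) : coords (a *: x + y) = a *: coords x + coords y.
Proof. by apply/rowP => i; rewrite !mxE linearP. Qed.

Lemma coords0 : coords (0 : F) = 0.
Proof. by apply/rowP => i; rewrite !mxE linear0. Qed.

Lemma coords_e i : coords (tnth e i) = delta_mx 0 i.
Proof.
apply/rowP => j; rewrite !mxE (tnth_nth 0) coord_free ?ebasis_free //.
by rewrite eqxx /= eq_sym.
Qed.

Lemma coords_eq0 (x : F) : coords x = 0 -> x = 0.
Proof.
move=> h; rewrite (coords_expand x) h; apply: big1 => i _.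
by rewrite mxE scale0r.
Qed.

Lemma mulmx_ofP (a : rat) (x y : F) :
  mulmx_of (a *: x + y) = a *: mulmx_of x + mulmx_of y.
Proof.
apply/matrixP => i j; rewrite !mxE mulrDl -scalerAl linearP.
by [].
Qed.

Lemma coords_mul (x y : F) : coords (x * y) = coords y *m mulmx_of x.
Proof.
apply/rowP => j; rewrite mxE {1}(coords_expand y) mulr_sumr linear_sum.
rewrite !mxE; apply: eq_bigr => i _; rewrite !mxE -scalerAr linearZ. by [].
Qed.

Lemma mulmx_of1 : mulmx_of (1 : F) = 1%:M.
Proof.
apply/matrixP => i j; rewrite !mxE mul1r (tnth_nth 0) coord_free ?ebasis_free //.
Qed.

Lemma trFP (a : rat) (x y : F) : trF (a *: x + y) = a * trF x + trF y.
Proof. by rewrite /trF mulmx_ofP mxtraceD mxtraceZ. Qed.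

Lemma trF1 : trF (1 : F) != 0.
Proof. by rewrite /trF mulmx_of1 mxtrace1 pnatr_eq0 -lt0n deg_gt0. Qed.


Fact coords_lin : linear (@coords F).
Proof. by move=> a x y; rewrite coordsP. Qed.
HB.instance Definition _ := GRing.isLinear.Build rat F 'rV[rat]_g _ (@coords F) coords_lin.

Fact trF_lin : linear (@trF F : F -> rat^o).
Proof. by move=> a x y; rewrite trFP. Qed.
HB.instance Definition _ := GRing.isLinear.Build rat F rat^o _ (@trF F : F -> rat^o) trF_lin.

Lemma trF_sum (I : Type) (r : seq I) (P : pred I) (f : I -> F) :
  trF (\sum_(i <- r | P i) f i) = \sum_(i <- r | P i) trF (f i).
Proof. exact: (linear_sum (@trF F : F -> rat^o)). Qed.

Lemma trFZ (a : rat) (x : F) : trF (a *: x) = a * trF x.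
Proof.
have h0 : mulmx_of (0 : F) = 0 by apply/matrixP => i j; rewrite !mxE mul0r linear0.
by rewrite -[a *: x]addr0 trFP /trF h0 mxtrace0 addr0.
Qed.

Lemma gram_sym : (gram F)^T = gram F.
Proof. by apply/matrixP => i j; rewrite !mxE mulrC. Qed.

Lemma tpair_tr (A B : 'M[rat]_g) :
  tpair A B = \tr (A^T *m gram F *m B *m gram F).
Proof.
symmetry; rewrite /tpair /mxtrace [in RHS]exchange_big /=; apply: eq_bigr => j _.
rewrite mxE.
under [LHS]eq_bigr => l _ do rewrite mxE big_distrl.
under [LHS]eq_bigr => l _ do under eq_bigr => k _ do rewrite mxE !big_distrl.
symmetry.
under eq_bigr => i _ do rewrite exchange_big.
rewrite exchange_big; apply: eq_bigr => l _.
rewrite exchange_big; apply: eq_bigr => k _; apply: eq_bigr => i _.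
have -> : gram F l j = gram F j l by rewrite -[in LHS]gram_sym mxE.
by rewrite !mxE (mulrAC (A i j)).
Qed.
End Basics.

Section Gram.
Variable F : fieldExtType rat.
Local Notation g := (deg F).
Local Notation e := (ebasis F).

Lemma coords_sumv (v : 'rV[rat]_g) : coords (\sum_i v 0 i *: tnth e i) = v.
Proof.
rewrite linear_sum; under eq_bigr => i _ do rewrite linearZ /= coords_e.
rewrite [RHS]matrix_sum_delta big_ord1; apply: eq_bigr => i _.
by rewrite (ord1 (ord0 : 'I_1)).
Qed.

Lemma gram_unit : gram F \in unitmx.
Proof.
rewrite -row_free_unit -kermx_eq0; apply/rowV0P => v /sub_kermxP hv.
apply/eqP/negPn/negP => vn0.
pose x := \sum_i v 0 i *: tnth e i.
have hxe j : trF (x * tnth e j) = 0.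
  rewrite /x mulr_suml trF_sum.
  under eq_bigr => i _ do rewrite -scalerAl trFZ.
  transitivity ((v *m gram F) 0 j); last by rewrite hv mxE.
  by rewrite mxE; apply: eq_bigr => i _; rewrite mxE.
have hx y : trF (x * y) = 0.
  rewrite (coords_expand y) mulr_sumr trF_sum; apply: big1 => i _.
  by rewrite -scalerAr trFZ hxe mulr0.
have xn0 : x != 0.
  by apply: contra vn0 => /eqP x0; rewrite -(coords_sumv v) -/x x0 coords0.
by move: (trF1 F); rewrite -(mulfV xn0) hx eqxx.
Qed.
End Gram.

Section Pairing.
Variable F : fieldExtType rat.
Local Notation g := (deg F).
Local Notation e := (ebasis F).
Local Notation G := (gram F).

Lemma tpairC (A B : 'M[rat]_g) : tpair A B = tpair B A.
Proof.
rewrite !tpair_tr -mxtrace_tr !trmx_mul !trmxK gram_sym.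
by rewrite -!mulmxA mxtrace_mulC -!mulmxA.
Qed.

Fact tpr_lin (A : 'M[rat]_g) : linear (fun B => tpair A B : rat^o).
Proof.
move=> a B C; rewrite !tpair_tr mulmxDr mulmxDl mxtraceD.
by rewrite -scalemxAr -scalemxAl mxtraceZ.
Qed.
Definition tpr (A : 'M[rat]_g) := (fun B => tpair A B : rat^o).
HB.instance Definition _ A := GRing.isLinear.Build rat 'M[rat]_g rat^o _ (tpr A) (tpr_lin A).

Lemma tpair_sum (A : 'M[rat]_g) (I : Type) (r : seq I) (P : pred I) (f : I -> 'M[rat]_g) :
  tpair A (\sum_(i <- r | P i) f i) = \sum_(i <- r | P i) tpair A (f i).
Proof. exact: (linear_sum (tpr A)). Qed.

Lemma tpairZ (A B : 'M[rat]_g) (a : rat) : tpair A (a *: B) = a * tpair A B.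
Proof. by rewrite !tpair_tr -scalemxAr -scalemxAl mxtraceZ. Qed.

Lemma tpair0 (A : 'M[rat]_g) : tpair A 0 = 0.
Proof. exact: (linear0 (tpr A)). Qed.

Lemma tpair_rep (D B : 'M[rat]_g) :
  tpair ((invmx G *m D *m invmx G)^T) B = \tr (D *m B).
Proof.
rewrite tpair_tr trmxK -!mulmxA (mulmxA (invmx G) G) mulVmx ?gram_unit // mul1mx.
by rewrite mxtrace_mulC -!mulmxA mulmxV ?gram_unit // mulmx1.
Qed.

Lemma trace_rep (phi : {linear 'M[rat]_g -> rat^o}) (B : 'M[rat]_g) :
  \tr ((\matrix_(j, i) phi (delta_mx i j)) *m B) = phi B.
Proof.
rewrite {2}(matrix_sum_delta B) linear_sum /mxtrace.
under [LHS]eq_bigr => k _ do rewrite mxE.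
rewrite exchange_big /=; apply: eq_bigr => i _; rewrite linear_sum; apply: eq_bigr => j _.
by rewrite !mxE linearZ /= mulrC.
Qed.
End Pairing.

Section Lam.
Variable F : fieldExtType rat.
Local Notation g := (deg F).
Local Notation e := (ebasis F).
Local Notation V := 'M[rat]_(deg F).

Fact mulmx_of_lin : linear (@mulmx_of F).
Proof. by move=> a x y; rewrite mulmx_ofP. Qed.
HB.instance Definition _ := GRing.isLinear.Build rat F 'M[rat]_g _ (@mulmx_of F) mulmx_of_lin.

Definition lamF (L : V) : {ffun 'I_g -> V} :=
  [ffun i => lact (tnth e i) L - ract (tnth e i) L].

Fact lamF_lin : linear lamF.
Proof.
move=> a L K; apply/ffunP => i; rewrite !ffunE /lact /ract.
rewrite mulmxDr mulmxDl -scalemxAr -scalemxAl.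
by rewrite scalerBr addrACA opprD.
Qed.
HB.instance Definition _ := GRing.isLinear.Build rat V {ffun 'I_g -> V} _ lamF lamF_lin.

Definition Lamv : {vspace V} := lker (linfun lamF).

Lemma memLam (L : V) : L \in Lamv <-> Lambda1 L.
Proof.
rewrite /Lamv memv_ker lfunE /=; split.
  move=> /eqP h lam; rewrite (coords_expand lam) /lact /ract !linear_sum.
  rewrite mulmx_suml; apply: eq_bigr => i _ /=.
  rewrite !linearZ /= -scalemxAl; congr (_ *: _).
  have := congr1 (fun f : {ffun 'I_g -> V} => f i) h; rewrite /= !ffunE => /eqP.
  by rewrite subr_eq0 => /eqP.
move=> h; apply/eqP/ffunP => i; rewrite !ffunE.
by rewrite h subrr.
Qed.


Definition kap (i0 : 'I_g) (lam : F) : 'rV[rat]_g := delta_mx 0 i0 *m (mulmx_of lam)^T.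

Fact kap_lin i0 : linear (kap i0).
Proof. by move=> a x y; rewrite /kap linearP /= linearP /= mulmxDr scalemxAr. Qed.
HB.instance Definition _ i0 := GRing.isLinear.Build rat F 'rV[rat]_g _ (kap i0) (kap_lin i0).

Lemma kap_inj0 i0 lam : kap i0 lam = 0 -> lam = 0.
Proof.
move=> h; apply/eqP/negPn/negP => ln0.
have hc i : coord e i0 (lam * tnth e i) = 0.
  have := congr1 (fun M : 'rV[rat]_g => M 0 i) h; rewrite /kap !mxE => <-.
  rewrite (bigD1 i0) //= big1 => [|j /negbTE ji]; last by rewrite !mxE ji mul0r.
  by rewrite !mxE !eqxx mul1r addr0.
have hy y : coord e i0 (lam * y) = 0.
  rewrite (coords_expand y) mulr_sumr linear_sum big1 // => i _.
  by rewrite -scalerAr linearZ /= hc mulr0.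
have := hy (lam^-1 * tnth e i0); rewrite mulrA mulfV // mul1r (tnth_nth 0).
by rewrite coord_free ?ebasis_free // eqxx.
Qed.

Lemma kap_surj i0 (v : 'rV[rat]_g) : exists lam, kap i0 lam = v.
Proof.
have k0 : lker (linfun (kap i0)) = 0%VS.
  apply/eqP/lker0P => x y; rewrite !lfunE /= => hxy.
  by apply/eqP; rewrite -subr_eq0; apply/eqP/(kap_inj0 (i0:=i0)); rewrite linearB /= hxy subrr.
have hd : \dim (linfun (kap i0) @: fullv)%VS = \dim (fullv : {vspace F}).
  by apply: limg_dim_eq; rewrite capfv k0.
have hfull : (linfun (kap i0) @: fullv)%VS = fullv.
  apply/eqP; rewrite -(dimv_leqif_eq (subvf _)) hd.
  rewrite !dimvf /=; apply/eqP; rewrite -dimvf -/(deg F); have := @dim_matrix rat 1 g; move=> ->; rewrite ?mul1r ?mul1n //=.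
have : v \in (linfun (kap i0) @: fullv)%VS by rewrite hfull memvf.
by case/memv_imgP => lam _ ->; exists lam; rewrite lfunE.
Qed.

Lemma Lamv_dim : (\dim Lamv <= g)%N.
Proof.
have i0 : 'I_g by exact: (Ordinal (deg_gt0 F)).
pose u : 'rV[rat]_g := delta_mx 0 i0.
have inj : (Lamv :&: lker (linfun (mulmx u)) = 0)%VS.
  apply/eqP; rewrite -subv0; apply/subvP => L /memv_capP [/memLam hL].
  rewrite memv_ker lfunE /= => /eqP uL0; rewrite memv0; apply/eqP.
  have hv (w : 'rV[rat]_g) : w *m L = 0.
    have [lam <-] := kap_surj i0 w.
    by rewrite /kap -mulmxA; have := hL lam; rewrite /lact /ract => ->; rewrite mulmxA uL0 mul0mx.
  apply/matrixP => i j; have := congr1 (fun M : 'rV[rat]_g => M 0 j) (hv (delta_mx 0 i)).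
  by rewrite -rowE !mxE.
rewrite -(limg_dim_eq inj); apply: leq_trans (dimvS (subvf _)) _.
by rewrite dimvf; have := @dim_matrix rat 1 g; move=> ->; rewrite ?mul1r ?mul1n.
Qed.

End Lam.

Section Main.
Variable F : fieldExtType rat.
Local Notation g := (deg F).
Local Notation e := (ebasis F).
Local Notation V := 'M[rat]_(deg F).
Variable GG : wgraph F.
Local Notation nh := (nH GG).

Definition Rh (h : 'I_nh) : V := tens (wt h) (wt h).

Definition evm n (f : 'I_n -> V) (A : V) : 'rV[rat]_n := \row_j tpair A (f j).

Fact evm_lin n f : linear (@evm n f).
Proof.
move=> a A B; apply/rowP => j; rewrite !mxE.
by rewrite (tpairC (a *: A + B)) (tpr_lin (f j) a A B) /= !(tpairC (f j)).
Qed.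
HB.instance Definition _ n f := GRing.isLinear.Build rat V 'rV[rat]_n _ (@evm n f) (@evm_lin n f).

Lemma mem_evm n f (A : V) : (A \in lker (linfun (@evm n f))) = [forall j, tpair A (f j) == 0].
Proof.
rewrite memv_ker lfunE /=; apply/eqP/forallP => [h j|h].
  by have := congr1 (fun M : 'rV[rat]_n => M 0 j) h; rewrite !mxE => ->.
by apply/rowP => j; rewrite !mxE; apply/eqP.
Qed.

Definition Nv := lker (linfun (@evm nh Rh)).

Lemma memNv A : A \in Nv <-> Nstr GG A.
Proof. by rewrite mem_evm; split => [/forallP h j|h]; [apply/eqP/h | apply/forallP => j; apply/eqP/h]. Qed.

Local Notation k := (\dim (Lamv F)).
Definition Lb := vbasis (Lamv F).
Definition AnnV := lker (linfun (@evm k (fun j => tnth Lb j))).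

Lemma memAnnV A : A \in AnnV <-> AnnL1 A.
Proof.
rewrite mem_evm; split => [/forallP h L /memLam hL|h].
  rewrite (coord_vbasis hL) tpair_sum big1 // => i _.
  by rewrite tpairZ -(tnth_nth 0) (eqP (h i)) mulr0.
apply/forallP => j; apply/eqP/h/memLam/vbasis_mem/mem_tnth.
Qed.

Definition Wv : {vspace V} := <<[seq Rh h | h <- enum 'I_nh]>>%VS.

Lemma Rh_in h : Rh h \in Wv.
Proof. by apply: memv_span; apply: map_f; rewrite mem_enum. Qed.

Lemma tr_tens (x : F) : \tr (tens x x) = \sum_i coords x 0 i ^+ 2.
Proof.
rewrite /mxtrace; apply: eq_bigr => i _; rewrite mxE big_ord1 !mxE.
by rewrite expr2.
Qed.

Definition phip (p : 'End(V)) (B : V) : rat^o := \tr (p B).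
Fact phip_lin p : linear (phip p).
Proof. by move=> a A B; rewrite /phip linearP /= mxtraceD mxtraceZ. Qed.
HB.instance Definition _ p := GRing.isLinear.Build rat V rat^o _ (phip p) (phip_lin p).

Lemma WLam_nz : admissible GG -> (exists h : 'I_nh, wt h != 0) -> (Wv :&: Lamv F)%VS != 0%VS.
Proof.
move=> adm [h0 wn0]; apply/negP => /eqP cap0.
pose p := daddv_pi Wv (Lamv F).
pose D : V := \matrix_(j, i) phip p (delta_mx i j).
pose A : V := (invmx (gram F) *m D *m invmx (gram F))^T.
have hA B : tpair A B = \tr (p B).
  by rewrite tpair_rep (trace_rep (phip p)).
have pW h : p (Rh h) = Rh h by apply: daddv_pi_id => //; apply: Rh_in.
have pL L : L \in Lamv F -> p L = 0.
  move=> hL; have := daddv_pi_add cap0 (subvP (addvSr Wv (Lamv F)) _ hL).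
  have cap0' : (Lamv F :&: Wv = 0)%VS by rewrite capvC.
  rewrite (daddv_pi_id cap0' hL) => /eqP.
  by move=> /eqP h; rewrite -[p L]addr0 -(subrr L) addrA h subrr.
have trge h : 0 <= \tr (Rh h).
  by rewrite tr_tens; apply: sumr_ge0 => i _; apply: sqr_ge0.
have hN : Nstr GG A.
  apply: adm.
    by move=> h; rewrite hA pW.
  by move=> L /memLam hL; rewrite hA pL // mxtrace0.
move: (hN h0); rewrite hA pW tr_tens => hs.
have hc : coords (wt h0) = 0.
  apply/rowP => i; rewrite [RHS]mxE.
  have := psumr_eq0P (fun i _ => sqr_ge0 (coords (wt h0) 0 i)) hs (i := i) isT.
  by move/eqP; rewrite sqrf_eq0 => /eqP.
by move: wn0; rewrite (coords_eq0 hc) eqxx.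
Qed.

Lemma dimrv n : \dim (fullv : {vspace 'rV[rat]_n}) = n.
Proof. by rewrite dimvf; have := @dim_matrix rat 1 n; move=> ->; rewrite ?mul1r ?mul1n. Qed.

Lemma dim_diff : (Wv :&: Lamv F)%VS != 0%VS -> (\dim Nv - \dim (Nv :&: AnnV) <= g - 1)%N.
Proof.
move=> nz.
pose L0 := vpick (Wv :&: Lamv F).
have L0n0 : L0 != 0 by rewrite vpick0.
have /memv_capP [L0W L0L] : L0 \in (Wv :&: Lamv F)%VS by apply: memv_pick.
pose Psi := linfun (@evm k (fun j => tnth Lb j)).
have hk := limg_ker_dim Psi Nv.
have -> : (\dim Nv - \dim (Nv :&: AnnV) = \dim (Psi @: Nv))%N by rewrite -hk addKn.
have kle := Lamv_dim F.
suff : (\dim (Psi @: Nv) < k)%N.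
  move=> h; rewrite subn1 -ltnS prednK ?deg_gt0 //; exact: leq_trans h kle.
have hL0 := coord_vbasis L0L.
have [j hj] : exists j, coord Lb j L0 != 0.
  case: (pickP (fun j => coord Lb j L0 != 0)) => [j hj|h0]; first by exists j.
  move: L0n0; rewrite hL0 big1 ?eqxx // => i _.
  by move: (h0 i) => /negbFE/eqP ->; rewrite scale0r.
have zero A : A \in Nv -> tpair A L0 = 0.
  move=> hA; have : (Wv <= lker (linfun (tpr A)))%VS.
    apply/span_subvP => _ /mapP [h _ ->]; rewrite memv_ker lfunE /=; apply/eqP.
    exact: (proj1 (memNv A) hA h).
  by move/subvP/(_ _ L0W); rewrite memv_ker lfunE => /eqP.
have ne : (Psi @: Nv)%VS != fullv.
  apply/negP => /eqP full.
  have : delta_mx 0 j \in (Psi @: Nv)%VS by rewrite full memvf.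
  case/memv_imgP => A hA hPsi.
  have ev i : tpair A (tnth Lb i) = (delta_mx 0 j : 'rV[rat]_k) 0 i.
    by rewrite hPsi lfunE /= !mxE.
  have := zero A hA; rewrite hL0 tpair_sum.
  under eq_bigr do rewrite tpairZ -(tnth_nth 0) ev.
  rewrite (bigD1 j) //= big1 => [|i /negbTE ij]; last by rewrite !mxE ij andbF mulr0.
  by rewrite !mxE !eqxx mulr1 addr0 => /eqP; rewrite (negbTE hj).
by rewrite -[X in (_ < X)%N](dimrv k) (ltn_leqif (dimv_leqif_eq (subvf _))).
Qed.
End Main.

Section SpanDim.
Variable F : fieldExtType rat.
Local Notation V := 'M[rat]_(deg F).

Lemma span_dim_uniq (P : V -> Prop) a b : span_dim P a -> span_dim P b -> a = b.
Proof.
move=> [[s [hs [fs <-]]] ha] [[t [ht [ft <-]]] hb].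
by apply/eqP; rewrite eqn_leq hb // ha.
Qed.

Lemma span_dim_sub (P Q : V -> Prop) (U : {vspace V}) (msc : V -> rat) d :
  (forall A, P A <-> (A \in U /\ Q A)) ->
  (forall A, msc A != 0 /\ Q (msc A *: A)) ->
  span_dim P d -> d = \dim U.
Proof.
move=> hP hm [[s [hs [fs sz]]] hmax].
apply/eqP; rewrite eqn_leq; apply/andP; split.
  rewrite -sz -(eqP fs); apply: dimvS; apply/span_subvP => A /hs /hP [].
  by [].
pose bU := vbasis U.
pose s' := [tuple msc (tnth bU i) *: tnth bU i | i < \dim U].
have -> : \dim U = size s' by rewrite size_tuple.
apply: hmax.
  move=> A /tnthP [i ->]; rewrite tnth_mktuple; apply/hP; split.
    by apply: memvZ; apply/vbasis_mem/mem_tnth.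
  by case: (hm (tnth bU i)).
apply/freeP => kk hk i.
have fb := basis_free (vbasisP U).
move/freeP: fb => /(_ (fun i => kk i * msc (tnth bU i))) h.
have : kk i * msc (tnth bU i) = 0.
  apply: h; rewrite -[RHS]hk; apply: eq_bigr => j _.
  by rewrite -scalerA /s' nth_mktuple (tnth_nth 0).
by move/eqP; rewrite mulf_eq0 => /orP [/eqP //|/eqP h0]; move: (proj1 (hm (tnth bU i))); rewrite h0 eqxx.
Qed.
End SpanDim.

Section Scale.
Variable F : fieldExtType rat.
Local Notation g := (deg F).
Local Notation e := (ebasis F).
Local Notation V := 'M[rat]_(deg F).
Variable I : F -> Prop.
Variable b : g.-tuple F.
Hypothesis hb : forall x, I x <-> zspan (fun i => tnth b i) x.

Lemma intmul_den (T : finType) (q : T -> rat) (t : T) :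
  ((\prod_(s : T) denq (q s))%:~R * q t) \is a Num.int.
Proof.
rewrite (bigD1 t) //= intrM mulrAC (mulrC (denq (q t))%:~R) -numqE.
by apply: rpredM; apply: intr_int.
Qed.

Definition dm (x : F) : int := \prod_(i < g) denq (trF (x * tnth b i)).

Lemma dm_neq0 x : dm x != 0.
Proof. by apply/prodf_neq0 => i _; apply: denq_neq0. Qed.

Lemma dual_dm x : dual_lattice I ((dm x)%:~R *: x).
Proof.
move=> y /hb [c ->]; rewrite mulr_sumr trF_sum; apply: rpred_sum => i _.
rewrite -scalerAr -scalerAl !trFZ.
apply: rpredM; first exact: intr_int.
exact: (intmul_den (fun i => trF (x * tnth b i))).
Qed.

Lemma dualZ (z : int) x : dual_lattice I x -> dual_lattice I (z%:~R *: x).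
Proof.
by move=> hx y hy; rewrite -scalerAl trFZ; apply: rpredM; [apply: intr_int | apply: hx].
Qed.

Definition Dm : int := \prod_(i < g) dm (tnth e i).
Definition fe (i : 'I_g) : F := Dm%:~R *: tnth e i.

Lemma Dm_neq0 : Dm != 0.
Proof. by apply/prodf_neq0 => i _; apply: dm_neq0. Qed.

Lemma dual_fe i : dual_lattice I (fe i).
Proof.
rewrite /fe /Dm (bigD1 i) //= mulrC intrM -scalerA.
exact/dualZ/dual_dm.
Qed.

Lemma tensZl (a : rat) (x y : F) : tens (a *: x) y = a *: tens x y.
Proof. by rewrite /tens linearZ /= linearZ /= -scalemxAl. Qed.

Lemma tens_fe i j : tens (fe i) (fe j) = (Dm%:~R * Dm%:~R) *: delta_mx i j.
Proof.
rewrite /tens /fe !linearZ /= !coords_e trmx_delta -scalemxAl mul_delta_mx scalerA. by [].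
Qed.

Definition Em (A : V) : int := \prod_(p : 'I_g * 'I_g) denq (A p.1 p.2).
Definition msc (A : V) : rat := (Em A * Dm * Dm)%:~R.

Lemma msc_neq0 A : msc A != 0.
Proof.
rewrite /msc intr_eq0 !mulf_neq0 ?Dm_neq0 //.
by apply/prodf_neq0 => p _; apply: denq_neq0.
Qed.

Lemma SZ_msc A : SZ I (msc A *: A).
Proof.
pose z (p : 'I_g * 'I_g) : int := Num.floor ((Em A)%:~R * A p.1 p.2).
have hz p : (z p)%:~R = (Em A)%:~R * A p.1 p.2.
  by apply/eqP; rewrite -intrEfloor; apply: intmul_den.
exists [seq ((z p)%:~R *: fe p.1, fe p.2) | p <- index_enum ('I_g * 'I_g)%type]; split.
  move=> q /mapP [p _ ->] /=; split; last exact: dual_fe.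
  exact/dualZ/dual_fe.
rewrite big_map.
have -> : msc A *: A = \sum_(p : 'I_g * 'I_g) tens ((z p)%:~R *: fe p.1) (fe p.2).
  rewrite {2}(matrix_sum_delta A) pair_bigA /= scaler_sumr; apply: eq_bigr => p _.
  rewrite tensZl tens_fe !scalerA hz /msc !intrM; congr (_ *: _).
  by rewrite -!mulrA; congr (_ * _); rewrite [RHS]mulrC mulrA.
by rewrite /= subrr /altt trmx0 oppr0.
Qed.

End Scale.

From mathcomp Require Import zify.

Theorem proposition3p4 (F : fieldExtType rat) (I : F -> Prop) (G : wgraph F) (d : nat) :
  totally_real F ->
  is_lattice I ->
  I_weighted_stable I (deg F) G ->
  admissible G ->
  RMtorus_dim I G d ->
  (d <= deg F - 1)%N.
Proof.
move=> _ [b [fb hb]] [_ _ _ _ [_ _ _ hspan]] adm.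
move=> [rX [rX' [[dP [da [hP [ha ->]]]] [[dP' [da' [hP' [ha' ->]]]] ->]]]].
have eqa := span_dim_uniq ha ha'; subst da'.
have hm A : msc b A != 0 /\ SZ I (msc b A *: A).
  by split; [apply: msc_neq0 | apply: SZ_msc].
have eP : dP = \dim (Nv G).
  apply: (span_dim_sub (Q := SZ I) _ hm hP) => A.
  by split => [[/memNv h s]|[/memNv h s]].
have eP' : dP' = \dim (Nv G :&: AnnV F)%VS.
  apply: (span_dim_sub (Q := SZ I) _ hm hP') => A.
  split => [[/memNv h [/memAnnV h' s]]|[/memv_capP [/memNv h /memAnnV h'] s]].
    by split => //; apply/memv_capP; split.
  by [].
have [h hw] : exists h : 'I_(nH G), wt h != 0.
  pose i0 := Ordinal (deg_gt0 F).
  have bn0 : tnth b i0 != 0 by apply: (free_not0 fb); apply: mem_tnth.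
  have : I (tnth b i0).
    apply/hb; exists (fun i => (i == i0)%:Z).
    rewrite (bigD1 i0) //= big1 => [|i /negbTE ->]; last by rewrite scale0r.
    by rewrite addr0 -[X in X *: _]/(1 : rat) scale1r.
  move=> /hspan [c hc].
  case: (pickP (fun h : 'I_(nH G) => wt h != 0)) => [h hh|h0]; first by exists h.
  move: bn0; rewrite hc big1 ?eqxx // => i _.
  by move: (h0 i) => /negbFE/eqP ->; rewrite scaler0.
have := dim_diff (WLam_nz adm (ex_intro _ h hw)).
rewrite -eP -eP'; lia.
Qed.
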